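(* There is no circulant weighing matrix $CW(130,81)$.
   Context: A circulant weighing matrix $CW(n,k)$ is an $n\times n$ circulant matrix $W$ (each row after the first is the right cyclic shift of the previous row) with all entries in $\{0,1,-1\}$ such that $WW^T=kI_n$. *)

(* Defs.v *)
From mathcomp Require Import all_boot all_algebra.
Set Implicit Arguments. Unset Strict Implicit. Unset Printing Implicit Defensive.
Import GRing.Theory Num.Theory.
Local Open Scope ring_scope.

Definition circulant (n : nat) (W : 'M[int]_n) : Prop :=
  forall (i j i' j' : 'I_n),
    i' = (i.+1 %% n)%N :> nat -> j' = (j.+1 %% n)%N :> nat -> W i' j' = W i j.

Arguments circulant : clear implicits.
Definition is_CW (n k : nat) (W : 'M[int]_n) : Prop :=
  circulant n W /\
  (forall i j : 'I_n, W i j \in [:: 0; 1; -1]) /\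
  W *m W^T = (k%:Z)%:M.
Arguments is_CW : clear implicits.

(* Main.v *)
Require Import Defs.
From mathcomp Require Import all_boot all_algebra.
From mathcomp Require Import ring lra zify.
Set Implicit Arguments. Unset Strict Implicit. Unset Printing Implicit Defensive.
Import GRing.Theory Num.Theory.
Local Open Scope ring_scope.

Section Key.
Variable R : comNzRingType.
Variable I : R -> Prop.
Hypothesis I0 : I 0.
Hypothesis ID : forall x y, I x -> I y -> I (x + y).
Hypothesis IM : forall x y, I y -> I (x * y).
Variable phi : {rmorphism R -> R}.
Hypothesis Iphi : forall v, I v -> I (phi v).
Variable e : nat.
Hypothesis e_gt0 : (0 < e)%N.
Hypothesis Hper : forall y, I (iter e phi y - y).
Hypothesis Hfrob : forall y, exists u, phi y - y ^+ 3 = 3%:R * u.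

Definition J (N : nat) (x : R) := exists u v, I v /\ x = (3%:R) ^+ N * u + v.

Lemma IMl x y : I x -> I (x * y).
Proof. by rewrite mulrC; apply: IM. Qed.

Lemma IN x : I x -> I (- x).
Proof. by move=> Ix; rewrite -mulN1r; apply: IM. Qed.

Lemma J0 x : J 0 x.
Proof. by exists x, 0; split => //; rewrite expr0 mul1r addr0. Qed.

Lemma JI N v : I v -> J N v.
Proof. by move=> Iv; exists 0, v; rewrite mulr0 add0r. Qed.

Lemma JD N x y : J N x -> J N y -> J N (x + y).
Proof.
move=> [u [v [Iv ->]]] [u' [v' [Iv' ->]]]; exists (u + u'), (v + v'); split; first exact: ID.
by rewrite mulrDr; ring.
Qed.

Lemma JN N x : J N x -> J N (- x).
Proof.
move=> [u [v [Iv ->]]]; exists (- u), (- v); split; first exact: IN.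
by rewrite opprD mulrN.
Qed.

Lemma JB N x y : J N x -> J N y -> J N (x - y).
Proof. by move=> hx hy; apply: JD => //; apply: JN. Qed.

Lemma JMl N x y : J N x -> J N (y * x).
Proof.
move=> [u [v [Iv ->]]]; exists (y * u), (y * v); split; first exact: IM.
by ring.
Qed.

Lemma JMr N x y : J N x -> J N (x * y).
Proof. by rewrite mulrC; apply: JMl. Qed.

Lemma JM a b x y : J a x -> J b y -> J (a + b) (x * y).
Proof.
move=> [u [v [Iv ->]]] [u' [v' [Iv' ->]]].
exists (u * u'), ((3%:R) ^+ a * u * v' + v * ((3%:R) ^+ b * u' + v')); split.
  by apply: ID; [apply: IM | apply: IMl].
by rewrite exprD; ring.
Qed.

Lemma Jle a b x : (a <= b)%N -> J b x -> J a x.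
Proof.
move=> ab [u [v [Iv ->]]]; exists ((3%:R) ^+ (b - a) * u), v; split => //.
by rewrite mulrA -exprD subnKC.
Qed.

Lemma J3 N x : J N x -> J N.+1 (3%:R * x).
Proof.
move=> [u [v [Iv ->]]]; exists u, (3%:R * v); split; first exact: IM.
by rewrite exprS; ring.
Qed.

Lemma Jphi N x : J N x -> J N (phi x).
Proof.
move=> [u [v [Iv ->]]]; exists (phi u), (phi v); split; first exact: Iphi.
by rewrite rmorphD rmorphM rmorphXn rmorph_nat.
Qed.

Lemma Jcube k x y : (0 < k)%N -> J k (x - y) -> J k.+1 (x ^+ 3 - y ^+ 3).
Proof.
move=> k0 hd; set d := x - y.
have -> : x ^+ 3 - y ^+ 3 = 3%:R * (y ^+ 2 * d + y * d * d) + d * d * d.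
  by rewrite /d; ring.
apply: JD; first by apply: J3; apply: JD; [apply: JMl | apply: JMr; apply: JMl].
apply: (@Jle _ (k + k + k)); first by lia.
by apply: JM => //; apply: JM.
Qed.

Lemma Jpowm N m x y : J N (x - y) -> J N (x ^+ m - y ^+ m).
Proof.
move=> h; elim: m => [|m IH]; first by rewrite !expr0 subrr; apply: JI.
have -> : x ^+ m.+1 - y ^+ m.+1 = x ^+ m * (x - y) + (x ^+ m - y ^+ m) * y.
  by rewrite !exprS; ring.
by apply: JD; [apply: JMl | apply: JMr].
Qed.

Lemma Jpow3 k x y : J 1 (x - y) -> J k.+1 (x ^+ (3 ^ k) - y ^+ (3 ^ k)).
Proof.
move=> h; elim: k => [|k IH]; first by rewrite expn0 !expr1.
rewrite expnSr !exprM; exact: Jcube.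
Qed.

Lemma Jfrob y : J 1 (phi y - y ^+ 3).
Proof. by have [u ->] := Hfrob y; exists u, 0; rewrite expr1 addr0. Qed.

Lemma Jiter k y : J 1 (y ^+ (3 ^ k) - iter k phi y).
Proof.
elim: k => [|k IH]; first by rewrite expn0 expr1 subrr; apply: JI.
rewrite expnSr exprM /=.
have -> : (y ^+ (3 ^ k)) ^+ 3 - phi (iter k phi y) =
   ((y ^+ (3 ^ k)) ^+ 3 - (iter k phi y) ^+ 3) - (phi (iter k phi y) - (iter k phi y) ^+ 3).
  by ring.
by apply: JB; [apply: Jpowm | apply: Jfrob].
Qed.

Let q' := (3 ^ e - 2)%N.
Lemma q'E : (3 ^ e = q'.+2)%N.
Proof.
rewrite /q'; have : (3 <= 3 ^ e)%N.
  by rewrite -{1}(expn1 3) leq_pexp2l.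
lia.
Qed.

Lemma Jq y : J 1 (y ^+ q'.+2 - y).
Proof.
rewrite -q'E.
have -> : y ^+ (3 ^ e) - y = (y ^+ (3 ^ e) - iter e phi y) + (iter e phi y - y) by ring.
by apply: JD; [apply: Jiter | apply: JI].
Qed.

Lemma Jeps y : J 1 ((y ^+ q'.+1) ^+ 3 - y ^+ q'.+1).
Proof.
set E := y ^+ q'.+1.
have h2 : J 1 (E ^+ 2 - E).
  have -> : E ^+ 2 - E = y ^+ q' * (y ^+ q'.+2 - y).
    by rewrite /E !exprS; ring.
  by apply: JMl; apply: Jq.
have -> : E ^+ 3 - E = (E + 1) * (E ^+ 2 - E) by ring.
by apply: JMl.
Qed.

Lemma Jeps_pow y N : J 1 ((y ^+ q'.+1) ^+ (3 ^ N) - y ^+ q'.+1).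
Proof.
set E := y ^+ q'.+1.
elim: N => [|N IH]; first by rewrite expn0 expr1 subrr; apply: JI.
rewrite expnSr exprM.
have -> : (E ^+ (3 ^ N)) ^+ 3 - E = ((E ^+ (3 ^ N)) ^+ 3 - E ^+ 3) + (E ^+ 3 - E) by ring.
by apply: JD; [apply: Jpowm | apply: Jeps].
Qed.

Lemma Key N : forall y, exists U, J N (phi y - y * U).
Proof.
elim: N => [|N IH] y; first by exists 0; apply: J0.
set E := y ^+ q'.+1.
set ee := E ^+ (3 ^ N).
have P6 : J 1 (y - y * ee).
  have -> : y - y * ee = (y - y ^+ q'.+2) - y * (ee - E).
    by rewrite /E !exprS; ring.
  apply: JB; last by apply: JMl; apply: Jeps_pow.
  by rewrite -opprB; apply: JN; apply: Jq.
have [u [v [Iv Huv]]] := P6.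
have [U' HU'] := IH u.
have P5 : J N.+1 (phi ee - ee).
  rewrite /ee rmorphXn; apply: Jpow3.
  rewrite /E rmorphXn.
  have -> : phi y ^+ q'.+1 - y ^+ q'.+1 =
    (phi y ^+ q'.+1 - (y ^+ 3) ^+ q'.+1) + ((y ^+ q'.+1) ^+ 3 - y ^+ q'.+1).
    by rewrite -!exprM mulnC; ring.
  by apply: JD; [apply: Jpowm; apply: Jfrob | apply: Jeps].
set V := y ^+ q' * E ^+ (3 ^ N).-1.
have EV : ee = y * V.
  rewrite /ee /V /E; have h : (0 < 3 ^ N)%N by rewrite expn_gt0.
  by rewrite -(prednK h) exprS prednK // exprS; ring.
exists (phi y * V + (1 - ee) * U').
have -> : phi y - y * (phi y * V + (1 - ee) * U') =
   (phi y - phi y * ee) - (y - y * ee) * U' by rewrite EV; ring.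
rewrite Huv.
have H1 : phi y - phi y * phi ee = (3%:R) ^+ 1 * phi u + phi v.
  by rewrite -rmorphM -rmorphB Huv rmorphD rmorphM rmorphXn rmorph_nat.
have -> : phi y - phi y * ee - ((3%:R) ^+ 1 * u + v) * U' =
   (phi y - phi y * phi ee) + phi y * (phi ee - ee) - ((3%:R) ^+ 1 * u + v) * U' by ring.
rewrite H1.
have -> : (3%:R) ^+ 1 * phi u + phi v + phi y * (phi ee - ee) - ((3%:R) ^+ 1 * u + v) * U'
  = 3%:R * (phi u - u * U') + (phi y * (phi ee - ee) + (phi v - v * U')) by ring.
apply: JD; first by apply: J3.
apply: JD; first by apply: JMl.
by apply: JI; apply: ID; [apply: Iphi | apply: IN; apply: IMl].
Qed.

Lemma multiplier A B : I (A * B - (3%:R) ^+ 4) -> J 4 (phi A * B).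
Proof.
move=> hAB; have [U hU] := Key 4 A.
have -> : phi A * B = (phi A - A * U) * B + U * (3%:R) ^+ 4 + U * (A * B - (3%:R) ^+ 4).
  by ring.
apply: JD; last by apply: JI; apply: IM.
apply: JD; first by apply: JMr.
by exists U, 0; split => //; rewrite addr0 mulrC.
Qed.

End Key.

Lemma sum_pick m (F : 'I_m -> int) (c : 'I_m) :
  \sum_(l < m) (((l : nat) == c)%:R * F l) = F c.
Proof.
rewrite (bigD1 c) //= eqxx mul1r big1 ?addr0 // => l /negbTE.
by rewrite -val_eqE /= => ->; rewrite mul0r.
Qed.

Lemma sum_pickZ (V : lmodType int) m (F : 'I_m -> V) (c : 'I_m) :
  \sum_(l < m) (((l : nat) == c)%:R *: F l) = F c.
Proof.
rewrite (bigD1 c) //= eqxx scale1r big1 ?addr0 // => l /negbTE.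
by rewrite -val_eqE /= => ->; rewrite scale0r.
Qed.

Definition shm (m : nat) : 'M[int]_m.+1 :=
  \matrix_(i, j) ((j : nat) == ((i : nat) + 1) %% m.+1)%N%:R.

Lemma shm_exp m k (i j : 'I_m.+1) :
  (shm m ^+ k) i j = ((j : nat) == ((i : nat) + k) %% m.+1)%N%:R.
Proof.
elim: k i j => [|k IH] i j.
  by rewrite expr0 mxE addn0 modn_small // eq_sym.
rewrite exprSr -mulmxE mxE.
have hc : ((i + k) %% m.+1 < m.+1)%N by rewrite ltn_mod.
rewrite (eq_bigr (fun l : 'I_m.+1 => (((l : nat) == Ordinal hc)%:R *
     ((j : nat) == ((Ordinal hc : nat) + 1) %% m.+1)%N%:R))).
  rewrite sum_pick /= modnDml addn1 addnS //.
move=> l _; rewrite IH mxE /=.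
by case: eqP => [->|]; rewrite ?mul1r ?mul0r.
Qed.

Lemma shm_per m : shm m ^+ m.+1 = 1.
Proof.
by apply/matrixP => i j; rewrite shm_exp !mxE modnDr modn_small // eq_sym.
Qed.

Lemma shm_mod m k : shm m ^+ (k %% m.+1) = shm m ^+ k.
Proof. by apply: expr_mod; apply: shm_per. Qed.

Lemma shm_tr m : (shm m)^T = shm m ^+ m.
Proof.
apply/matrixP => i j; rewrite shm_exp !mxE.
suff -> : ((i : nat) == ((j : nat) + 1) %% m.+1)%N = ((j : nat) == ((i : nat) + m) %% m.+1)%N by [].
apply/idP/idP => /eqP h.
  have hj : (j < m.+1)%N by [].
  case: (ltnP j m) => hjm.
    rewrite modn_small ?addn1 // in h; rewrite h.
    by rewrite addSn -addnS modnDr modn_small.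
  have jm : j = m :> nat by apply/eqP; rewrite eqn_leq hjm -ltnS hj.
  rewrite jm addn1 modnn in h; rewrite h add0n modn_small //.
  by rewrite jm.
have hi : (i < m.+1)%N by [].
case: (posnP i) => hi0.
  by rewrite hi0 add0n modn_small // in h; rewrite h addn1 modnn hi0.
rewrite (_ : (i + m = i.-1 + m.+1)%N) in h; last by lia.
rewrite modnDr modn_small in h; last by lia.
rewrite h addn1 prednK // modn_small //.
Qed.

Lemma horner_mx_sum m (Z : 'M[int]_m.+1) (p : {poly int}) :
  horner_mx Z p = \sum_(k < size p) p`_k *: Z ^+ k.
Proof.
rewrite -{1}(coefK p) poly_def linear_sum /=.
by apply: eq_bigr => k _; rewrite linearZ /= rmorphXn /= horner_mx_X.
Qed.

Lemma tr_exp m (Z : 'M[int]_m.+1) k : (Z ^+ k)^T = (Z^T) ^+ k.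
Proof.
elim: k => [|k IH]; first by rewrite !expr0 trmx1.
by rewrite exprSr -mulmxE trmx_mul IH mulmxE -exprS.
Qed.

Lemma horner_mx_tr m (Z : 'M[int]_m.+1) p : horner_mx (Z^T) p = (horner_mx Z p)^T.
Proof.
rewrite !horner_mx_sum linear_sum /=.
by apply: eq_bigr => k _; rewrite linearZ /= tr_exp.
Qed.

Lemma horner_mx_comp m (Z : 'M[int]_m.+1) p q :
  horner_mx Z (p \Po q) = horner_mx (horner_mx Z q) p.
Proof.
elim/poly_ind: p => [|p c IH]; first by rewrite comp_poly0 !rmorph0.
rewrite comp_poly_MXaddC !rmorphD !rmorphM /= IH !horner_mx_C horner_mx_X.
by [].
Qed.

Lemma transfer m (Z : 'M[int]_m.+1) (hZ : Z ^+ 130 = 1) p :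
  horner_mx Z p = \sum_(j < 130) (horner_mx (shm 129) p) 0 j *: Z ^+ j.
Proof.
rewrite horner_mx_sum.
under [RHS]eq_bigr => j _ do rewrite horner_mx_sum summxE scaler_suml.
rewrite exchange_big /=; apply: eq_bigr => k _.
have hc : (k %% 130 < 130)%N by rewrite ltn_mod.
rewrite -(expr_mod k hZ) -(sum_pickZ (fun j : 'I_130 => p`_k *: Z ^+ j) (Ordinal hc)) /=.
apply: eq_bigr => j _; rewrite !mxE shm_exp /= add0n.
by rewrite scalerA mulrC.
Qed.

Lemma ab_lemma (a b : int) : a \in [:: 0; 1; -1] -> b \in [:: 0; 1; -1] ->
  (a ^+ 2 + 4 * b ^+ 2 <= (a + 4 * b) ^+ 2) /\
  ((a + 4 * b) ^+ 2 = a ^+ 2 + 4 * b ^+ 2 -> a ^+ 2 + 4 * b ^+ 2 <= 1).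
Proof.
by rewrite !inE => /or3P [] /eqP -> /or3P [] /eqP ->; split.
Qed.

Lemma shift_sum (F : nat -> int) a b :
  \sum_(a <= i < a + b) F i = \sum_(0 <= i < b) F (i + a)%N.
Proof.
have := big_addn 0 (a + b) a xpredT F; rewrite add0n => ->.
by rewrite addKn.
Qed.

Lemma reidx (F : nat -> int) : \sum_(j < 130) F j =
  \sum_(l < 26) (F l + F (l + 26)%N + F (l + 52)%N + F (l + 78)%N + F (l + 104)%N).
Proof.
rewrite -(big_mkord xpredT F).
rewrite (@big_cat_nat _ _ _ 104); [|by []|by []].
rewrite (@big_cat_nat _ _ _ 78); [|by []|by []].
rewrite (@big_cat_nat _ _ _ 52); [|by []|by []].
rewrite (@big_cat_nat _ _ _ 26); [|by []|by []].
rewrite (shift_sum F 104 26).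
rewrite (shift_sum F 78 26) (shift_sum F 52 26) (shift_sum F 26 26).
by rewrite !big_mkord !big_split /=.
Qed.



Lemma mod26 l k : ((l + 26 * k) %% 26 = l %% 26)%N.
Proof. by rewrite addnC mulnC modnMDl. Qed.

Section Final.
Variable dn : nat -> int.
Hypothesis H27 : forall j, (j < 130)%N -> dn ((27 * j) %% 130) = dn j.
Hypothesis Hval : forall j, (j < 130)%N -> dn j \in [:: 0; 1; -1].

Definition s5 l := dn l + dn (l + 26) + dn (l + 52) + dn (l + 78) + dn (l + 104).
Definition q5 l := dn l ^+ 2 + dn (l + 26) ^+ 2 + dn (l + 52) ^+ 2 + dn (l + 78) ^+ 2
   + dn (l + 104) ^+ 2.

Ltac normdn := repeat match goal with |- context [dn ?x] =>
  let y := eval vm_compute in x in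
  tryif constr_eq x y then fail else change (dn x) with (dn y) end.

Ltac cls_tac e x y1 y2 y3 :=
  exists (dn e), (dn x); split; [exact: (@Hval e isT)|];
  split; [exact: (@Hval x isT)|];
  rewrite /s5 /q5; normdn;
  (have: dn y3 = dn y2 := @H27 y2 isT); move=> ->;
  (have: dn y2 = dn y1 := @H27 y1 isT); move=> ->;
  (have: dn y1 = dn x := @H27 x isT); move=> ->;
  split; ring.

Lemma classP l : (l < 26)%N -> exists a b : int, a \in [:: 0; 1; -1] /\ b \in [:: 0; 1; -1] /\
  s5 l = a + 4 * b /\ q5 l = a ^+ 2 + 4 * b ^+ 2.
Proof.
case: l => [_|l]; first by cls_tac 0%N 26%N 52%N 104%N 78%N.
case: l => [_|l]; first by cls_tac 105%N 1%N 27%N 79%N 53%N.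
case: l => [_|l]; first by cls_tac 80%N 2%N 54%N 28%N 106%N.
case: l => [_|l]; first by cls_tac 55%N 3%N 81%N 107%N 29%N.
case: l => [_|l]; first by cls_tac 30%N 4%N 108%N 56%N 82%N.
case: l => [_|l]; first by cls_tac 5%N 31%N 57%N 109%N 83%N.
case: l => [_|l]; first by cls_tac 110%N 6%N 32%N 84%N 58%N.
case: l => [_|l]; first by cls_tac 85%N 7%N 59%N 33%N 111%N.
case: l => [_|l]; first by cls_tac 60%N 8%N 86%N 112%N 34%N.
case: l => [_|l]; first by cls_tac 35%N 9%N 113%N 61%N 87%N.
case: l => [_|l]; first by cls_tac 10%N 36%N 62%N 114%N 88%N.
case: l => [_|l]; first by cls_tac 115%N 11%N 37%N 89%N 63%N.
case: l => [_|l]; first by cls_tac 90%N 12%N 64%N 38%N 116%N.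
case: l => [_|l]; first by cls_tac 65%N 13%N 91%N 117%N 39%N.
case: l => [_|l]; first by cls_tac 40%N 14%N 118%N 66%N 92%N.
case: l => [_|l]; first by cls_tac 15%N 41%N 67%N 119%N 93%N.
case: l => [_|l]; first by cls_tac 120%N 16%N 42%N 94%N 68%N.
case: l => [_|l]; first by cls_tac 95%N 17%N 69%N 43%N 121%N.
case: l => [_|l]; first by cls_tac 70%N 18%N 96%N 122%N 44%N.
case: l => [_|l]; first by cls_tac 45%N 19%N 123%N 71%N 97%N.
case: l => [_|l]; first by cls_tac 20%N 46%N 72%N 124%N 98%N.
case: l => [_|l]; first by cls_tac 125%N 21%N 47%N 99%N 73%N.
case: l => [_|l]; first by cls_tac 100%N 22%N 74%N 48%N 126%N.
case: l => [_|l]; first by cls_tac 75%N 23%N 101%N 127%N 49%N.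
case: l => [_|l]; first by cls_tac 50%N 24%N 128%N 76%N 102%N.
case: l => [_|l]; first by cls_tac 25%N 51%N 77%N 129%N 103%N.
by [].
Qed.

Lemma final_contra :
  \sum_(j < 130) dn j ^+ 2 = 81 ->
  \sum_(l < 26) (\sum_(j < 130) dn j * ((l : nat) == j %% 26)%N%:R) ^+ 2 = 81 -> False.
Proof.
move=> Hw Hu.
have inner : forall l : 'I_26,
    \sum_(j < 130) dn j * ((l : nat) == j %% 26)%N%:R = s5 l.
  move=> l; rewrite (reidx (fun j => dn j * ((l : nat) == j %% 26)%N%:R)).
  rewrite (eq_bigr (fun l' : 'I_26 => (((l' : nat) == l)%:R * s5 l'))); first by rewrite sum_pick.
  move=> l' _; have hl' : (l' < 26)%N := ltn_ord l'.
  have m0 : (l' %% 26 = l')%N := modn_small hl'.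
  have m1 : ((l' + 26) %% 26 = l')%N := etrans (mod26 l' 1) m0.
  have m2 : ((l' + 52) %% 26 = l')%N := etrans (mod26 l' 2) m0.
  have m3 : ((l' + 78) %% 26 = l')%N := etrans (mod26 l' 3) m0.
  have m4 : ((l' + 104) %% 26 = l')%N := etrans (mod26 l' 4) m0.
  rewrite m0 m1 m2 m3 m4 [(l : nat) == _]eq_sym.
  by rewrite /s5; ring.
have {}Hu : \sum_(l < 26) s5 l ^+ 2 = 81 by rewrite -Hu; apply: eq_bigr => l _; rewrite inner.
rewrite (reidx (fun j => dn j ^+ 2)) in Hw.
have Hq : \sum_(l < 26) q5 l = 81 by rewrite -Hw; apply: eq_bigr.
have hge : forall l : 'I_26, 0 <= s5 l ^+ 2 - q5 l.
  move=> l; have [a [b [ha [hb [-> ->]]]]] := classP (ltn_ord l).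
  by rewrite subr_ge0; case: (ab_lemma ha hb).
have hsum : \sum_(l < 26) (s5 l ^+ 2 - q5 l) = 0 by rewrite sumrB Hu Hq subrr.
have h0 := psumr_eq0P (fun l _ => hge l) hsum.
have hle : forall l : 'I_26, q5 l <= 1.
  move=> l; have := h0 l isT; have [a [b [ha [hb [-> ->]]]]] := classP (ltn_ord l).
  by move/eqP; rewrite subr_eq0 => /eqP; case: (ab_lemma ha hb).
have : \sum_(l < 26) q5 l <= \sum_(l < 26) (1 : int) by apply: ler_sum => l _; apply: hle.
by rewrite Hq sumr_const card_ord.
Qed.

End Final.

Notation P := (shm 129).
Notation Mx := (horner_mx P).
Notation c81 := ((81%:Z)%:P : {poly int}).

Lemma c81E : ((3%:R) ^+ 4 : {poly int}) = c81.
Proof. by rewrite (_ : 81%:Z = (3%:R) ^+ 4) // rmorphXn /= rmorph_nat. Qed.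

Lemma P130 : P ^+ 130 = 1.
Proof. exact: shm_per. Qed.

Lemma Ppow_mod k : P ^+ (k %% 130) = P ^+ k.
Proof. exact: shm_mod. Qed.

Lemma MxX k : Mx ('X^k) = P ^+ k.
Proof. by rewrite rmorphXn /= horner_mx_X. Qed.

Lemma Mx_comp p q : Mx (p \Po q) = horner_mx (Mx q) p.
Proof. exact: horner_mx_comp. Qed.

Lemma kerZ m (Z : 'M[int]_m.+1) (hZ : Z ^+ 130 = 1) v :
  Mx v = 0 -> horner_mx Z v = 0.
Proof.
move=> hv; rewrite (transfer hZ) big1 // => j _.
by rewrite hv mxE scale0r.
Qed.

Lemma Iphi v : Mx v = 0 -> Mx (v \Po 'X^3) = 0.
Proof.
move=> hv; rewrite Mx_comp MxX; apply: kerZ hv.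
by rewrite -exprM mulnC exprM P130 expr1n.
Qed.

Lemma iter_phi k (y : {poly int}) :
  iter k (comp_poly 'X^3) y = y \Po 'X^(3 ^ k).
Proof.
elim: k => [|k IH]; first by rewrite expn0 expr1 comp_polyXr.
rewrite iterS IH -comp_polyA rmorphXn /= comp_polyX -exprM.
by rewrite expnS mulnC.
Qed.

Lemma Hper y : Mx (iter 12 (comp_poly 'X^3) y - y) = 0.
Proof.
rewrite iter_phi rmorphB /= Mx_comp MxX -Ppow_mod.
have -> : (3 ^ 12 %% 130 = 1)%N by vm_compute.
by rewrite expr1 subrr.
Qed.

Lemma int_frob (c : int) : exists k : int, c - c ^+ 3 = 3 * k.
Proof.
have := divz_eq c 3; set d := (c %/ 3)%Z; set r := (c %% 3)%Z => hc.
have r0 : 0 <= r by rewrite /r modz_ge0.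
have r3 : r < 3 by rewrite /r ltz_pmod.
clearbody d r.
have : (r == 0) || (r == 1) || (r == 2) by lia.
case/orP => [/orP []|] /eqP hr; rewrite hc hr.
- by exists (- 9 * d ^+ 3 + d); ring.
- by exists (- 9 * d ^+ 3 - 9 * d ^+ 2 - 2 * d); ring.
- by exists (- 9 * d ^+ 3 - 18 * d ^+ 2 - 12 * d + d - 2); ring.
Qed.

Lemma Frob (y : {poly int}) : exists u, y \Po 'X^3 - y ^+ 3 = 3%:R * u.
Proof.
elim/poly_ind: y => [|p c [u IH]]; first by exists 0; rewrite comp_poly0 expr0n /= subrr mulr0.
have [k hk] := int_frob c.
exists (u * 'X^3 - p ^+ 2 * 'X^2 * c%:P - p * 'X * c%:P ^+ 2 + k%:P).
rewrite comp_poly_MXaddC.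
have hp : p \Po 'X^3 = p ^+ 3 + 3%:R * u by rewrite -IH; ring.
have hc : c%:P - (c%:P) ^+ 3 = 3%:R * k%:P.
  have := congr1 (fun x : int => x%:P) hk; rewrite /= rmorphB rmorphXn rmorphM /= => ->.
  by rewrite polyC_natr.
rewrite hp; apply/eqP; rewrite -subr_eq0; apply/eqP.
have -> : (p ^+ 3 + 3%:R * u) * 'X^3 + c%:P - (p * 'X + c%:P) ^+ 3 -
    3%:R * (u * 'X^3 - p ^+ 2 * 'X^2 * c%:P - p * 'X * c%:P ^+ 2 + k%:P) =
    (c%:P - (c%:P) ^+ 3) - 3%:R * k%:P.
  by ring.
by rewrite hc subrr.
Qed.

Lemma Mx_psi p : Mx (p \Po 'X^129) = (Mx p)^T.
Proof. by rewrite Mx_comp MxX -shm_tr horner_mx_tr. Qed.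

Lemma shm_pow130 m : (130 %% m.+1 = 0)%N -> shm m ^+ 130 = 1.
Proof. by move=> h; rewrite -shm_mod h expr0. Qed.

Lemma proj m (h1 : (130 %% m.+1 = 0)%N) (h2 : (129 %% m.+1 = m)%N) p :
  Mx (p * (p \Po 'X^129) - c81) = 0 ->
  horner_mx (shm m) p * (horner_mx (shm m) p)^T = (81%:Z)%:M.
Proof.
move=> hv; have := kerZ (shm_pow130 h1) hv.
rewrite rmorphB rmorphM /= horner_mx_comp rmorphXn /= horner_mx_X -shm_mod h2.
rewrite -shm_tr horner_mx_tr horner_mx_C.
by move/eqP; rewrite subr_eq0 => /eqP.
Qed.

Lemma uniq_add a j j' : (j < 130)%N -> (j' < 130)%N ->
  ((a + j) %% 130 = (a + j') %% 130)%N -> j = j'.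
Proof. by move=> hj hj' /eqP; rewrite eqn_modDl !modn_small // => /eqP. Qed.

Lemma circ_step (W : 'M[int]_130) : circulant 130 W ->
  forall a, (a < 130)%N -> forall (b : 'I_130) j, (j < 130)%N ->
  ((a + j) %% 130 = b)%N -> W (inord a) b = W 0 (inord j).
Proof.
move=> hc; elim=> [|a IH] ha b j hj hab.
  rewrite add0n modn_small // in hab.
  have -> : (inord 0 : 'I_130) = 0 by apply: val_inj; rewrite /= inordK.
  by congr (W _ _); apply: val_inj; rewrite /= inordK.
have hb' : ((a + j) %% 130 < 130)%N by rewrite ltn_mod.
rewrite -(IH (ltnW ha) (Ordinal hb') j hj) //.
apply: hc => /=.
  by rewrite !inordK // ?addn1 ?modn_small //; lia.
by rewrite -[((a + j) %% 130).+1]addn1 modnDml addn1 -addSn hab.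
Qed.

Lemma circE (W : 'M[int]_130) : circulant 130 W ->
  W = Mx (\sum_(j < 130) W 0 j *: 'X^j).
Proof.
move=> hc; apply/matrixP => a b.
rewrite linear_sum summxE.
have hj0 : ((b + 130 - a) %% 130 < 130)%N by rewrite ltn_mod.
set j0 := Ordinal hj0.
have hab : ((a + j0) %% 130 = b)%N.
  rewrite /= modnDmr (_ : (a + (b + 130 - a) = b + 130)%N); last first.
    have := ltn_ord a; lia.
  by rewrite modnDr modn_small.
rewrite (eq_bigr (fun j : 'I_130 => (((j : nat) == j0)%:R * W 0 j))); last first.
  move=> j _; rewrite linearZ /= MxX !mxE shm_exp mulrC.
  suff -> : ((b : nat) == (a + j) %% 130)%N = ((j : nat) == j0) by [].
  apply/eqP/eqP => [hb|->]; last by [].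
  by apply: (@uniq_add a) => //; rewrite hab hb.
rewrite sum_pick.
have := @circ_step W hc a (ltn_ord a) b j0 (ltn_ord j0) hab.
by rewrite !inord_val.
Qed.

Lemma scale_inj m n (a : int) (X Y : 'M[int]_(m, n)) : a != 0 -> a *: X = a *: Y -> X = Y.
Proof.
move=> a0 /matrixP h; apply/matrixP => i j; have := h i j; rewrite !mxE.
exact: mulfI.
Qed.

Lemma sq_sum1 (f : 'I_130 -> int) : \sum_l f l ^+ 2 = 1 ->
  exists k, f k ^+ 2 = 1 /\ forall l, l != k -> f l = 0.
Proof.
move=> hs; case: (pickP (fun k => f k != 0)) => [k hk|h0]; last first.
  move: hs; rewrite big1 // => l _.
  by have := h0 l; rewrite /= => /negbFE /eqP ->; rewrite expr0n.
rewrite (bigD1 k) //= in hs.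
move: hs; set S := (X in _ + X = _) => hs.
have h2 : 0 <= S by apply: sumr_ge0 => l _; apply: sqr_ge0.
have h1 : 1 <= f k ^+ 2.
  move: hk; rewrite expr2; set x := f k => hx.
  have : (1 <= x) \/ (x <= -1) by lia.
  by case => h; nia.
have e1 : f k ^+ 2 = 1 by lia.
exists k; split => // l hl.
have hz : S = 0 by lia.
have := psumr_eq0P (fun l _ => sqr_ge0 (f l)) hz hl.
by move/eqP; rewrite sqrf_eq0 => /eqP.
Qed.

Lemma sum2 (F : 'I_2 -> int) : \sum_(l < 2) F l = F ord0 + F ord_max.
Proof. by rewrite big_ord_recl big_ord1; congr (_ + F _); apply: val_inj. Qed.

Lemma phi_congr (x y : {poly int}) : Mx x = Mx y -> Mx (x \Po 'X^3) = Mx (y \Po 'X^3).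
Proof.
move=> h; apply/eqP; rewrite -subr_eq0 -rmorphB -comp_polyB; apply/eqP.
by apply: Iphi; apply/eqP; rewrite rmorphB subr_eq0; apply/eqP; exact: h.
Qed.

Lemma inv27 j j' : (j < 130)%N -> (j' < 130)%N ->
  ((27 * j) %% 130 == (27 * j') %% 130)%N = (j == j').
Proof.
move=> hj hj'; apply/eqP/eqP => [h|->]; last by [].
have key x : (x < 130)%N -> ((53 * ((27 * x) %% 130)) %% 130 = x)%N.
  move=> hx; rewrite modnMmr mulnA (_ : (53 * 27 = 1 + 130 * 11)%N) //.
  by rewrite mulnDl mul1n -mulnA addnC [(130 * _)%N]mulnC modnMDl modn_small.
by rewrite -(key j hj) h key.
Qed.

Lemma Ipoly0 : Mx 0 = 0. Proof. exact: rmorph0. Qed.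

Theorem proposition3 : ~ exists W : 'M[int]_130, is_CW 130 81 W.
Proof.
move=> [W [Hc [Hent HW]]].
set A := \sum_(j < 130) W 0 j *: 'X^j.
have MA : Mx A = W by rewrite /A -circE.
set B := A \Po 'X^129.
have MB : Mx B = W^T by rewrite Mx_psi MA.
have IAB : Mx (A * B - c81) = 0.
  by rewrite rmorphB rmorphM /= MA MB -mulmxE HW horner_mx_C subrr.
have Hmul := @multiplier {poly int} (fun v => Mx v = 0) Ipoly0
  (fun x y hx hy => etrans (rmorphD _ x y) (etrans (congr2 +%R hx hy) (addr0 0)))
  (fun x y hy => etrans (rmorphM _ x y) (etrans (congr1 (fun z => Mx x * z) hy) (mulr0 _)))
  (comp_poly 'X^3) Iphi 12 isT Hper Frob A B.
have [u [v [Iv Huv]]] : J (fun v => Mx v = 0) 4 ((A \Po 'X^3) * B).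
  by apply: Hmul; rewrite c81E.
set F := Mx (A \Po 'X^3).
set G := Mx u.
have FWG : F * W^T = (81%:Z)%:M * G.
  have := congr1 Mx Huv; rewrite rmorphM /= MB rmorphD rmorphM /= Iv addr0 c81E.
  by rewrite horner_mx_C.
have e387 : (A \Po 'X^3) \Po 'X^129 = B \Po 'X^3.
  rewrite /B -!comp_polyA; congr (A \Po _).
  by rewrite !rmorphXn /= !comp_polyX -!exprM mulnC.
have FF : F * F^T = (81%:Z)%:M.
  rewrite /F -Mx_psi e387 -rmorphM -comp_polyM.
  have -> : A * B = (A * B - c81) + c81 by rewrite subrK.
  by rewrite comp_polyD rmorphD /= Iphi // comp_polyC horner_mx_C add0r.
have WW : W^T * W = (81%:Z)%:M.
  by rewrite -MB -MA -rmorphM mulrC rmorphM /= MA MB -mulmxE HW.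
set c := 81%:Z.
have FWG' : F *m W^T = c *: G by rewrite mulmxE FWG -mulmxE mul_scalar_mx.
have FF' : F *m F^T = c%:M by rewrite mulmxE FF.
have WW' : W^T *m W = c%:M by rewrite mulmxE WW.
have GG : G *m G^T = 1%:M.
  have h1 : (F *m W^T) *m (F *m W^T)^T = (c * c) *: 1%:M.
    rewrite trmx_mul trmxK mulmxA -(mulmxA F) WW' mul_mx_scalar -scalemxAl FF'.
    by rewrite !scale_scalar_mx mulr1.
  have h2 : (F *m W^T) *m (F *m W^T)^T = (c * c) *: (G *m G^T).
    by rewrite FWG' linearZ /= -scalemxAl -scalemxAr scalerA.
  by apply: (@scale_inj _ _ (c * c)); rewrite // -h1 -h2.
have [k [gk2 g0]] : exists k : 'I_130, G 0 k ^+ 2 = 1 /\ forall l, l != k -> G 0 l = 0.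
  apply: sq_sum1; have := congr1 (fun M : 'M[int]_130 => M 0 0) GG.
  rewrite /= !mxE /= => h; rewrite -[RHS]h.
  by apply: eq_bigr => l _; rewrite mxE expr2.
set g := G 0 k.
have GE : G = g *: P ^+ k.
  rewrite {1}/G (transfer P130 u) (bigD1 k) //= big1 ?addr0 // => l hl.
  by rewrite -/G g0 // scale0r.
have FE : F = g *: (P ^+ k *m W).
  apply: (@scale_inj _ _ c) => //.
  rewrite -mul_mx_scalar -WW' mulmxA FWG' -scalemxAl GE -scalemxAl.
  by rewrite scalemxAl.
have Iphi_eq : Mx (A \Po 'X^3 - g%:P * 'X^k * A) = 0.
  rewrite rmorphB !rmorphM /= horner_mx_C MxX MA -/F FE.
  by rewrite -!mulmxE mul_scalar_mx scalemxAl subrr.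
set Q2 := shm 1.
have Q2130 : Q2 ^+ 130 = 1 := @shm_pow130 1 erefl.
set X2 := horner_mx Q2 A.
have XX : X2 * X2^T = (81%:Z)%:M := @proj 1 erefl erefl A IAB.
have X2eq : X2 = g *: (Q2 ^+ k *m X2).
  have := kerZ Q2130 Iphi_eq.
  rewrite rmorphB !rmorphM /= horner_mx_comp rmorphXn /= horner_mx_X -shm_mod.
  rewrite (_ : (3 %% 2 = 1)%N) // expr1 horner_mx_C rmorphXn /= horner_mx_X -/X2.
  move/eqP; rewrite subr_eq0 => /eqP {1}->.
  by rewrite -!mulmxE mul_scalar_mx scalemxAl.
have X2E (i j : 'I_2) : X2 i j = \sum_(l < 130) W 0 l * ((j : nat) == ((i : nat) + l) %% 2)%N%:R.
  by rewrite /X2 (transfer Q2130 A) summxE; apply: eq_bigr => l _; rewrite MA mxE shm_exp.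
have X10 : X2 ord_max ord0 = X2 ord0 ord_max.
  rewrite !X2E; apply: eq_bigr => l _ /=.
  by rewrite !modn2 oddD add0n /=; case: (odd l).
have X11 : X2 ord_max ord_max = X2 ord0 ord0.
  rewrite !X2E; apply: eq_bigr => l _ /=.
  by rewrite !modn2 oddD add0n /=; case: (odd l).
have Hsq : X2 ord0 ord0 ^+ 2 + X2 ord0 ord_max ^+ 2 = 81.
  have := congr1 (fun M : 'M[int]_2 => M ord0 ord0) XX.
  by rewrite /= -mulmxE mxE sum2 !mxE /= mulr1n !expr2.
have Qk (j : 'I_2) : (Q2 ^+ k *m X2) ord0 j = X2 (Ordinal (ltn_pmod k (erefl : (0 < 2)%N))) j.
  rewrite mxE -(sum_pick (fun l => X2 l j)); apply: eq_bigr => l _.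
  by rewrite shm_exp add0n.
have e1 := congr1 (fun M : 'M[int]_2 => M ord0 ord0) X2eq.
have e2 := congr1 (fun M : 'M[int]_2 => M ord0 ord_max) X2eq.
rewrite /= mxE Qk in e1; rewrite /= mxE Qk in e2.
have [g1 ek] : g = 1 /\ ~~ odd k.
  set a := X2 ord0 ord0 in Hsq e1 e2 X11; set b := X2 ord0 ord_max in Hsq e1 e2 X10.
  have hg : (g - 1) * (g + 1) = 0 by rewrite -subr_sqr gk2 subrr.
  case ok : (odd k).
    have hk : Ordinal (ltn_pmod k (erefl : (0 < 2)%N)) = ord_max.
      by apply: val_inj; rewrite /= modn2 ok.
    rewrite hk in e1 e2; rewrite X10 in e1; rewrite X11 in e2.
    have : a ^+ 2 = b ^+ 2 by rewrite e1 exprMn gk2 mul1r.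
    move=> hab; exfalso; move: Hsq; rewrite hab; lia.
  have hk : Ordinal (ltn_pmod k (erefl : (0 < 2)%N)) = ord0.
    by apply: val_inj; rewrite /= modn2 ok.
  rewrite hk in e1 e2; split => //.
  move/eqP: hg; rewrite mulf_eq0 => /orP [/eqP|/eqP] hg; first by lia.
  have ga : g = -1 by lia.
  exfalso; move: Hsq e1 e2; rewrite ga !mulN1r => Hsq e1 e2.
  have a0 : a = 0 by lia.
  have b0 : b = 0 by lia.
  by move: Hsq; rewrite a0 b0 expr0n.
set t := k./2.
set s := (130 - t)%N.
have k2 : ((k : nat) = t + t)%N.
  by have := odd_double_half k; rewrite (negbTE ek) add0n -addnn.
have ht : (t <= 64)%N by have := ltn_ord k; lia.
set D := 'X^s * A.
have MD : Mx D = P ^+ s *m W by rewrite rmorphM /= MxX MA mulmxE.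
have FE1 : F = P ^+ k *m W by rewrite FE g1 scale1r.
have IphiD : Mx (D \Po 'X^3) = Mx D.
  rewrite comp_polyM rmorphM /= -/F FE1 rmorphXn /= comp_polyX -exprM MxX MD.
  rewrite -mulmxE mulmxA mulmxE -exprD.
  have E : ((3 * s + k) %% 130 = s %% 130)%N.
    by rewrite (_ : (3 * s + k = 2 * 130 + s)%N) ?modnMDl //; lia.
  by rewrite -(Ppow_mod (3 * s + k)) E Ppow_mod.
have I27 : Mx (D \Po 'X^27) = Mx D.
  have h1 := phi_congr IphiD.
  have h2 := phi_congr h1.
  have -> : D \Po 'X^27 = ((D \Po 'X^3) \Po 'X^3) \Po 'X^3.
    by symmetry; exact: (iter_phi 3 D).
  by rewrite h2 h1 IphiD.
pose dn := fun j : nat => Mx D 0 (inord j).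
have hP27 : (P ^+ 27) ^+ 130 = 1 by rewrite -exprM mulnC exprM P130 expr1n.
have H27 : forall j, (j < 130)%N -> dn ((27 * j) %% 130)%N = dn j.
  move=> j hj; rewrite /dn.
  have E : Mx D = \sum_(i < 130) (Mx D 0 i) *: (P ^+ 27) ^+ i.
    by rewrite -{1}I27 Mx_comp MxX (transfer hP27 D).
  rewrite {1}E summxE -(sum_pick (fun i => Mx D 0 i) (inord j)).
  apply: eq_bigr => i _; rewrite mxE -exprM shm_exp add0n !inordK ?ltn_mod //.
  by rewrite inv27 // [(j == _)]eq_sym mulrC.
have Hval : forall j, (j < 130)%N -> dn j \in [:: 0; 1; -1].
  move=> j hj; rewrite /dn MD mxE.
  have hc : (s %% 130 < 130)%N by rewrite ltn_mod.
  rewrite (eq_bigr (fun l : 'I_130 => (((l : nat) == Ordinal hc)%:R * W l (inord j)))).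
    by rewrite sum_pick; apply: Hent.
  by move=> l _; rewrite shm_exp add0n.
have MDD : Mx D *m (Mx D)^T = c%:M.
  rewrite MD trmx_mul mulmxA -(mulmxA _ W) HW mul_mx_scalar -scalemxAl.
  rewrite tr_exp shm_tr mulmxE -exprM -exprD (_ : (s + 129 * s = 130 * s)%N); last by lia.
  by rewrite exprM P130 expr1n scalemx1.
have IDD : Mx (D * (D \Po 'X^129) - c81) = 0.
  by rewrite rmorphB rmorphM /= Mx_psi -mulmxE MDD horner_mx_C subrr.
have Hw : \sum_(j < 130) dn j ^+ 2 = 81.
  have := congr1 (fun M : 'M[int]_130 => M 0 0) MDD.
  rewrite /= !mxE /= => h; rewrite (_ : 81 = c *+ 1) // -h; apply: eq_bigr => l _.
  by rewrite /dn inord_val mxE expr2.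
set U := horner_mx (shm 25) D.
have UU : U * U^T = (81%:Z)%:M := @proj 25 erefl erefl D IDD.
have Q26 : (shm 25) ^+ 130 = 1 := @shm_pow130 25 erefl.
have UE (l : 'I_26) : U 0 l = \sum_(j < 130) dn j * ((l : nat) == j %% 26)%N%:R.
  rewrite /U (transfer Q26 D) summxE; apply: eq_bigr => j _.
  by rewrite mxE shm_exp add0n /dn inord_val.
have Hu : \sum_(l < 26) (\sum_(j < 130) dn j * ((l : nat) == j %% 26)%N%:R) ^+ 2 = 81.
  have := congr1 (fun M : 'M[int]_26 => M 0 0) UU.
  rewrite /= -mulmxE !mxE /= => h; rewrite (_ : 81 = 81%:Z *+ 1) // -h; apply: eq_bigr => l _.
  by rewrite mxE -UE expr2.
exact: (final_contra H27 Hval Hw Hu).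
Qed.
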